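(* Let $D$ be a quadratic discriminant and $\mathcal{O}_D$ the associated quadratic order. Suppose that every rational prime number $p$ satisfying \[ p \le \begin{cases} \sqrt{|D|/3} & \text{if } D<0,\\ \sqrt{D/5} & \text{if } D>0\end{cases} \] that is irreducible in $\mathcal{O}_D$ is also prime in $\mathcal{O}_D$. Then $\mathcal{O}_D$ is a unique factorization domain.
   Context: A quadratic discriminant is a nonsquare integer $D$ with $D\equiv 0$ or $1 \pmod 4$. Write $D=4d+\sigma$ with $\sigma\in\{0,1\}$ and $d\in\mathbb{Z}$, and let $\tau=\frac{\sigma+\sqrt{D}}{2}$. Then $\mathcal{O}_D=\mathbb{Z}[\tau]=\mathbb{Z}+\mathbb{Z}\tau=\{\frac{u+v\sqrt{D}}{2}: u,v\in\mathbb{Z},\ u\equiv vD \pmod 2\}$. In a domain $R$, an element $\pi$ is irreducible if it is nonzero, not a unit, and whenever $\pi=\alpha\beta$ with $\alpha,\beta\in R$ one of $\alpha,\beta$ is a unit; $\pi$ is prime if it is nonzero, not a unit, and $\pi\mid\alpha\beta$ implies $\pi\mid\alpha$ or $\pi\mid\beta$. *)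

(* Defs.v *)
From Stdlib Require Import ZArith Znumtheory List Permutation.
Open Scope Z_scope.

Definition quad_disc (D : Z) : Prop :=
  (D mod 4 = 0 \/ D mod 4 = 1) /\ ~ (exists k : Z, k * k = D).

Definition qsigma (D : Z) : Z := D mod 4.
Definition qd (D : Z) : Z := (D - qsigma D) / 4.

(* Elements of O_D = Z + Z tau, represented as a + b tau,
   tau = (sigma + sqrt D)/2, so tau^2 = sigma tau + d. *)
Record OD : Type := mkOD { re : Z ; im : Z }.

Definition OD0 : OD := mkOD 0 0.
Definition OD1 : OD := mkOD 1 0.
Definition ODint (n : Z) : OD := mkOD n 0.

Definition ODmul (D : Z) (x y : OD) : OD :=
  mkOD (re x * re y + im x * im y * qd D)
       (re x * im y + im x * re y + im x * im y * qsigma D).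

Definition ODunit (D : Z) (x : OD) : Prop := exists y, ODmul D x y = OD1.
Definition ODdvd (D : Z) (x y : OD) : Prop := exists z, y = ODmul D x z.

Definition ODirreducible (D : Z) (x : OD) : Prop :=
  x <> OD0 /\ ~ ODunit D x /\
  forall a b, x = ODmul D a b -> ODunit D a \/ ODunit D b.

Definition ODprime (D : Z) (x : OD) : Prop :=
  x <> OD0 /\ ~ ODunit D x /\
  forall a b, ODdvd D x (ODmul D a b) -> ODdvd D x a \/ ODdvd D x b.

Definition ODassoc (D : Z) (x y : OD) : Prop :=
  exists u, ODunit D u /\ y = ODmul D u x.

Definition ODprod (D : Z) (l : list OD) : OD := fold_right (ODmul D) OD1 l.

Definition ODisUFD (D : Z) : Prop :=
  forall x, x <> OD0 -> ~ ODunit D x ->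
    (exists l, Forall (ODirreducible D) l /\ ODprod D l = x) /\
    (forall l1 l2, Forall (ODirreducible D) l1 -> Forall (ODirreducible D) l2 ->
       ODprod D l1 = x -> ODprod D l2 = x ->
       exists l2', Permutation l2 l2' /\ Forall2 (ODassoc D) l1 l2').

(* p <= sqrt(|D|/3) (D<0) resp. p <= sqrt(D/5) (D>0), for p > 0,
   stated equivalently without square roots. *)
Definition small_prime_bound (D p : Z) : Prop :=
  (D < 0 -> 3 * (p * p) <= - D) /\ (D > 0 -> 5 * (p * p) <= D).

(* Main.v *)
Require Import Defs.
From Stdlib Require Import ZArith Znumtheory List Permutation Lia Psatz Classical.
Open Scope Z_scope.

Definition ODadd (x y : OD) : OD := mkOD (re x + re y) (im x + im y).
Definition ODopp (x : OD) : OD := mkOD (- re x) (- im x).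
Definition Nm (D : Z) (x : OD) : Z :=
  re x * re x + qsigma D * re x * im x - qd D * im x * im x.
Definition conj (D : Z) (x : OD) : OD := mkOD (re x + qsigma D * im x) (- im x).

Definition tau : OD := mkOD 0 1.

Ltac odcase := repeat match goal with x : OD |- _ => let a := fresh "a" in let b := fresh "b" in destruct x as [a b] end.
Ltac odeq := intros; odcase; unfold ODmul, ODadd, ODopp, conj, ODint, OD1, OD0, Nm, tau in *; cbv beta iota delta [re im] in *; f_equal; ring.

Lemma mul_comm D x y : ODmul D x y = ODmul D y x. Proof. odeq. Qed.
Lemma mul_assoc D x y z : ODmul D x (ODmul D y z) = ODmul D (ODmul D x y) z. Proof. odeq. Qed.
Lemma mul_1_l D x : ODmul D OD1 x = x. Proof. odeq. Qed.
Lemma mul_1_r D x : ODmul D x OD1 = x. Proof. odeq. Qed.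
Lemma mul_conj D x : ODmul D x (conj D x) = ODint (Nm D x). Proof. odeq. Qed.
Lemma Nm_mul D x y : Nm D (ODmul D x y) = Nm D x * Nm D y.
Proof. odcase; unfold ODmul, Nm; cbv beta iota delta [re im]; ring. Qed.
Lemma conj_mul D x y : conj D (ODmul D x y) = ODmul D (conj D x) (conj D y). Proof. odeq. Qed.
Lemma conj_conj D x : conj D (conj D x) = x. Proof. odeq. Qed.
Lemma Nm_conj D x : Nm D (conj D x) = Nm D x. Proof. odcase; unfold conj, Nm; cbv beta iota delta [re im]; ring. Qed.
Lemma Nm_int D n : Nm D (ODint n) = n * n. Proof. unfold Nm, ODint; cbv beta iota delta [re im]; ring. Qed.
Lemma Nm_1 D : Nm D OD1 = 1. Proof. unfold Nm, OD1; cbv beta iota delta [re im]; ring. Qed.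
Lemma int_mul D m n : ODmul D (ODint m) (ODint n) = ODint (m * n). Proof. odeq. Qed.
Lemma conj_int D n : conj D (ODint n) = ODint n. Proof. odeq. Qed.
Lemma mul_int_l D n x : ODmul D (ODint n) x = mkOD (n * re x) (n * im x). Proof. odeq. Qed.

Lemma qfacts D : quad_disc D -> (qsigma D = 0 \/ qsigma D = 1) /\ D = 4 * qd D + qsigma D.
Proof.
  intros [H _]. unfold qd, qsigma.
  pose proof (Z.div_mod D 4 ltac:(lia)).
  replace (D - D mod 4) with ((D / 4) * 4) by lia.
  rewrite Z.div_mul by lia. pose proof (Z.mod_pos_bound D 4). lia.
Qed.

Lemma sq_desc D : forall n : nat, forall b c, 0 < b <= Z.of_nat n -> 0 <= c -> c * c = D * b * b ->
  exists k, k * k = D.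
Proof.
  induction n; intros b c Hb Hc E. lia.
  assert (HD : 0 <= D) by nia.
  pose proof (Z.sqrt_spec D HD) as Hs. cbn zeta in Hs. set (r := Z.sqrt D) in *.
  assert (0 <= r) by (apply Z.sqrt_nonneg).
  destruct (Z.eq_dec (r * r) D) as [e|ne]. eauto.
  assert (r * r < D) by lia.
  assert (r * b < c) by nia.
  assert (c < (r + 1) * b) by nia.
  apply (IHn (c - r * b) (D * b - r * c)).
  - lia.
  - nia.
  - nia.
Qed.

Lemma Nm_zero D x : quad_disc D -> Nm D x = 0 -> x = OD0.
Proof.
  intros hD H. destruct (qfacts D hD) as [Hs Hd]. pose proof hD as [_ NS].
  destruct x as [a b]. unfold Nm in H; cbn in H.
  assert (E : (2*a + qsigma D * b) * (2*a + qsigma D * b) = D * b * b).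
  { destruct Hs as [Hs|Hs]; rewrite Hs in *; nia. }
  destruct (Z.eq_dec b 0) as [->|nb].
  - assert (a = 0) by nia. subst. reflexivity.
  - exfalso. apply NS.
    apply (sq_desc D (Z.to_nat (Z.abs b)) (Z.abs b) (Z.abs (2*a + qsigma D * b))); try lia.
Qed.

Lemma OD_ext x y : re x = re y -> im x = im y -> x = y.
Proof. destruct x, y; cbn; intros; subst; reflexivity. Qed.

Lemma unit_Nm D x : ODunit D x <-> Nm D x = 1 \/ Nm D x = -1.
Proof.
  split.
  - intros [y Hy]. apply (f_equal (Nm D)) in Hy. rewrite Nm_mul, Nm_1 in Hy.
    apply Z.eq_mul_1 in Hy. lia.
  - intros [H|H].
    + exists (conj D x). rewrite mul_conj, H. reflexivity.
    + exists (ODmul D (ODint (-1)) (conj D x)).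
      rewrite mul_assoc, (mul_comm D x), <- mul_assoc, mul_conj, H, int_mul. reflexivity.
Qed.

Lemma unit_Nm_abs D x : ODunit D x <-> Z.abs (Nm D x) = 1.
Proof. rewrite unit_Nm. lia. Qed.

Lemma dvd_refl D x : ODdvd D x x.
Proof. exists OD1. rewrite mul_1_r. reflexivity. Qed.

Lemma dvd_trans D x y z : ODdvd D x y -> ODdvd D y z -> ODdvd D x z.
Proof. intros [a ->] [b ->]. exists (ODmul D a b). symmetry. apply mul_assoc. Qed.

Lemma dvd_mul_r D x y w : ODdvd D x y -> ODdvd D x (ODmul D y w).
Proof. intros [a ->]. exists (ODmul D a w). symmetry. apply mul_assoc. Qed.

Lemma dvd_mul_l D x y w : ODdvd D x y -> ODdvd D x (ODmul D w y).
Proof. rewrite mul_comm. apply dvd_mul_r. Qed.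

Lemma dvd_conj D x y : ODdvd D x y -> ODdvd D (conj D x) (conj D y).
Proof. intros [a ->]. exists (conj D a). apply conj_mul. Qed.

Lemma dvd_Nm D x y : ODdvd D x y -> (Nm D x | Nm D y).
Proof. intros [a ->]. rewrite Nm_mul. exists (Nm D a). ring. Qed.

Lemma dvd_int_iff D p y : ODdvd D (ODint p) y <-> (p | re y) /\ (p | im y).
Proof.
  split.
  - intros [z ->]. rewrite mul_int_l. cbn. split; [exists (re z)|exists (im z)]; ring.
  - intros [[a Ha] [b Hb]]. exists (mkOD a b). rewrite mul_int_l. apply OD_ext; cbn; lia.
Qed.

Lemma dvd_int_int D p n : (p | n) -> ODdvd D (ODint p) (ODint n).
Proof. intros [a ->]. exists (ODint a). rewrite int_mul. f_equal. ring. Qed.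

Lemma mul_add_r D x y z : ODmul D x (ODadd y z) = ODadd (ODmul D x y) (ODmul D x z). Proof. odeq. Qed.
Lemma mul_opp_r D x y : ODmul D x (ODopp y) = ODopp (ODmul D x y). Proof. odeq. Qed.
Lemma add_opp_cancel x y : ODadd (ODadd x y) (ODopp y) = x. Proof. odeq. Qed.

Lemma dvd_add D x a b : ODdvd D x a -> ODdvd D x b -> ODdvd D x (ODadd a b).
Proof. intros [u ->] [v ->]. exists (ODadd u v). symmetry. apply mul_add_r. Qed.

Lemma dvd_add_inv D x a b : ODdvd D x (ODadd a b) -> ODdvd D x b -> ODdvd D x a.
Proof.
  intros [u Hu] [v ->]. exists (ODadd u (ODopp v)).
  rewrite mul_add_r, mul_opp_r, <- Hu. symmetry. apply add_opp_cancel.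
Qed.

Lemma Nm_nonzero D x : quad_disc D -> x <> OD0 -> Nm D x <> 0.
Proof. intros hD H E. apply H. eapply Nm_zero; eauto. Qed.

Lemma OD0_Nm D : Nm D OD0 = 0. Proof. unfold Nm, OD0; cbn; ring. Qed.

Lemma mul_cancel D x a b : quad_disc D -> x <> OD0 -> ODmul D x a = ODmul D x b -> a = b.
Proof.
  intros hD Hx E. apply (f_equal (ODmul D (conj D x))) in E.
  rewrite !mul_assoc, (mul_comm D (conj D x)), mul_conj, !mul_int_l in E.
  pose proof (Nm_nonzero D x hD Hx).
  injection E; intros. apply OD_ext; nia.
Qed.

Lemma unit_dvd D u x : ODunit D u -> ODdvd D u x.
Proof. intros [v Hv]. exists (ODmul D v x). rewrite mul_assoc, Hv, mul_1_l. reflexivity. Qed.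

Lemma dvd_unit D x u : ODunit D u -> ODdvd D x u -> ODunit D x.
Proof. intros [v Hv] [w ->]. exists (ODmul D w v). rewrite mul_assoc. exact Hv. Qed.

Lemma unit_mul D u v : ODunit D u -> ODunit D v -> ODunit D (ODmul D u v).
Proof. rewrite !unit_Nm, Nm_mul. lia. Qed.

Lemma prime_assoc D p u : quad_disc D -> ODprime D p -> ODunit D u -> ODprime D (ODmul D p u).
Proof.
  intros hD [H0 [H1 H2]] Hu. pose proof Hu as Hu'. rewrite unit_Nm in Hu'.
  split; [|split].
  - intro E. apply (f_equal (Nm D)) in E. rewrite Nm_mul, OD0_Nm in E.
    apply (Nm_nonzero D p hD H0). nia.
  - intro E. apply H1. rewrite unit_Nm in *. rewrite Nm_mul in E. nia.
  - intros a b Hd. assert (Hp : ODdvd D p (ODmul D a b)).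
    { eapply dvd_trans; [|exact Hd]. exists u. reflexivity. }
    destruct Hu as [v Hv].
    destruct (H2 a b Hp) as [[w ->]|[w ->]]; [left|right];
      exists (ODmul D v w); rewrite <- mul_assoc, (mul_assoc D u v), Hv, mul_1_l; reflexivity.
Qed.

Lemma prime_gt1 q : prime q -> 1 < q.
Proof. intros [H _]. exact H. Qed.

Lemma residue_formula D a x2 v u e :
  ODmul D a (ODadd (ODint (x2 * v)) (ODmul D (ODint (x2*u*e)) (ODmul D (conj D a) tau)))
  = mkOD (x2 * v * re a) (x2 * (v * im a + u * (e * Nm D a))).
Proof. odeq. Qed.

Lemma prime_norm D al q : quad_disc D -> prime q -> (Nm D al = q \/ Nm D al = - q) -> ODprime D al.
Proof.
  intros hD Hq HN. pose proof (prime_gt1 q Hq) as Hq1.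
  assert (Hal0 : al <> OD0). { intro E. subst. rewrite OD0_Nm in HN. lia. }
  assert (Hna2 : ~ (q | im al)).
  { intros [t Ht]. destruct al as [a1 a2]; cbn in Ht. subst a2. unfold Nm in HN; cbn in HN.
    set (s := qsigma D) in *. set (d := qd D) in *.
    assert (Hd : (q | a1 * a1)).
    { assert (Hd2 : (q | a1 * a1 + s * a1 * (t * q) - d * (t * q) * (t * q))).
      { destruct HN as [HN|HN]; rewrite HN; [exists 1|exists (-1)]; ring. }
      replace (a1 * a1) with ((a1 * a1 + s * a1 * (t * q) - d * (t * q) * (t * q)) + q * (d * t * t * q - s * a1 * t)) by ring.
      apply Z.divide_add_r; [exact Hd2|]. apply Z.divide_factor_l. }
    destruct (prime_mult q Hq a1 a1 Hd) as [[r Hr]|[r Hr]]; subst a1;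
    (set (X := r * r + s * r * t - d * t * t);
    assert (HX : (q * X) * q = 1 * q \/ (q * X) * q = (-1) * q) by (unfold X; destruct HN as [HN|HN]; [left|right]; lia);
    destruct HX as [HX|HX]; apply Z.mul_reg_r in HX; try lia;
    [apply Z.eq_mul_1 in HX | assert (HY : q * (- X) = 1) by lia; apply Z.eq_mul_1 in HY]; lia). }
  destruct (rel_prime_bezout _ _ (prime_rel_prime q Hq _ Hna2)) as [u v Hb].
  assert (He : exists e, e * e = 1 /\ q = e * Nm D al).
  { destruct HN as [HN|HN]; [exists 1|exists (-1)]; lia. }
  destruct He as [e [He1 He2]].
  assert (Hres : forall x, exists r w, x = ODadd (ODint r) (ODmul D al w)).
  { intro x. exists (re x - im x * v * re al).
    exists (ODadd (ODint (im x * v)) (ODmul D (ODint (im x*u*e)) (ODmul D (conj D al) tau))).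
    rewrite residue_formula, <- He2. destruct x as [x1 x2]. apply OD_ext; cbn; [ring|]. replace (v * im al + u * q) with 1 by lia. ring. }
  assert (Hint : forall n, ODdvd D al (ODint n) <-> (q | n)).
  { intro n. split.
    - intros Hd. apply dvd_Nm in Hd. rewrite Nm_int in Hd.
      assert (Hd' : (q | n * n)). { apply Z.divide_trans with (Nm D al); [exists e; nia|exact Hd]. }
      destruct (prime_mult q Hq n n Hd'); assumption.
    - intros [t ->]. exists (ODmul D (conj D al) (ODint (e * t))).
      rewrite mul_assoc, mul_conj, int_mul. f_equal. rewrite He2. ring. }
  split; [exact Hal0|split].
  - rewrite unit_Nm. lia.
  - intros x y Hxy.
    destruct (Hres x) as [r [w Hx]]. destruct (Hres y) as [r' [w' Hy]].
    assert (Hrr : ODdvd D al (ODint (r * r'))).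
    { apply (dvd_add_inv D al _ (ODmul D al (ODadd (ODmul D w (ODint r')) (ODadd (ODmul D (ODint r) w') (ODmul D al (ODmul D w w')))))).
      - replace (ODadd (ODint (r * r')) (ODmul D al (ODadd (ODmul D w (ODint r')) (ODadd (ODmul D (ODint r) w') (ODmul D al (ODmul D w w'))))))
          with (ODmul D x y); [exact Hxy|].
        subst x y. odeq.
      - apply dvd_refl' || (exists (ODadd (ODmul D w (ODint r')) (ODadd (ODmul D (ODint r) w') (ODmul D al (ODmul D w w'))))); reflexivity. }
    rewrite Hint in Hrr. destruct (prime_mult q Hq r r' Hrr) as [Hr|Hr]; rewrite <- Hint in Hr; [left|right].
    + rewrite Hx. apply dvd_add; [exact Hr|]. exists w; reflexivity.
    + rewrite Hy. apply dvd_add; [exact Hr|]. exists w'; reflexivity.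
Qed.

Lemma nonprime_norm D p a b : prime p -> ODdvd D (ODint p) (ODmul D a b) -> ~ ODdvd D (ODint p) b ->
  (p | Nm D a).
Proof.
  intros Hp Hab Hb. apply (dvd_mul_l D _ _ (conj D a)) in Hab.
  rewrite mul_assoc, (mul_comm D (conj D a)), mul_conj, mul_int_l in Hab.
  apply dvd_int_iff in Hab. cbn in Hab. destruct Hab as [H1 H2].
  destruct (prime_mult p Hp _ _ H1) as [H|H1']; [exact H|].
  destruct (prime_mult p Hp _ _ H2) as [H|H2']; [exact H|].
  exfalso. apply Hb. apply dvd_int_iff. tauto.
Qed.

Lemma root_from_norm D p a : prime p -> (p | Nm D a) -> ~ ODdvd D (ODint p) a ->
  exists m, (p | Nm D (mkOD m 1)).
Proof.
  intros Hp [k Hk] Ha. destruct a as [a1 a2].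
  assert (Hna2 : ~ (p | a2)).
  { intros [t Ht]. apply Ha. apply dvd_int_iff. cbn. split; [|exists t; exact Ht].
    subst a2. unfold Nm in Hk; cbn in Hk.
    assert (Hd : (p | a1 * a1)).
    { exists (k - qsigma D * a1 * t + qd D * t * t * p). nia. }
    destruct (prime_mult p Hp _ _ Hd); assumption. }
  destruct (rel_prime_bezout _ _ (prime_rel_prime p Hp _ Hna2)) as [u v Hb].
  exists (v * a1).
  exists (v * v * k + qsigma D * (v * a1) * u - qd D * u * (v * a2 + 1)).
  assert (E : Nm D (mkOD (v*a1) 1) = v * v * Nm D (mkOD a1 a2) + p * (qsigma D * (v * a1) * u - qd D * u * (v * a2 + 1))
     + (1 - (u*p + v*a2)) * (qsigma D * (v*a1) - qd D * (1 + v * a2))).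
  { unfold Nm; cbv beta iota delta [re im]. ring. }
  rewrite E, Hb, Hk. ring.
Qed.

Lemma four_Nm D m : quad_disc D -> 4 * Nm D (mkOD m 1) = (2*m + qsigma D) * (2*m + qsigma D) - D.
Proof.
  intros hD. destruct (qfacts D hD) as [Hs Hd]; unfold Nm; cbv beta iota delta [re im].
  set (s := qsigma D) in *; set (d := qd D) in *. rewrite Hd. destruct Hs as [Hs|Hs]; rewrite Hs; ring.
Qed.

Lemma choose_m D p m : quad_disc D -> prime p -> (p | Nm D (mkOD m 1)) -> ~ small_prime_bound D p ->
  exists m', (p | Nm D (mkOD m' 1)) /\ Nm D (mkOD m' 1) <> 0 /\ Z.abs (Nm D (mkOD m' 1)) < p * p.
Proof.
  intros hD Hp Hm Hb. pose proof (prime_gt1 p Hp) as Hp1.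
  assert (HD0 : D <> 0). { intro. subst. apply (proj2 hD). exists 0. reflexivity. }
  set (s := qsigma D).
  assert (Hs : s = 0 \/ s = 1) by (apply qfacts; exact hD).
  assert (Hch : forall c, exists m', (p | Nm D (mkOD m' 1)) /\ c < 2*m' + s <= c + 2*p).
  { intro c. set (Q := (2*m+s-c-1) / (2*p)). set (R := (2*m+s-c-1) mod (2*p)).
    pose proof (Z.div_mod (2*m+s-c-1) (2*p) ltac:(lia)) as HQ. fold Q R in HQ.
    pose proof (Z.mod_pos_bound (2*m+s-c-1) (2*p) ltac:(lia)) as HR. fold R in HR.
    exists (m - p * Q). split; [|lia].
    destruct Hm as [k Hk].
    exists (k - Q * (2*m - p*Q + s)).
    replace (Nm D (mkOD (m - p*Q) 1)) with (Nm D (mkOD m 1) - p * Q * (2*m - p*Q + s)) by (unfold Nm, s; cbv beta iota delta [re im]; ring).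
    rewrite Hk. ring. }
  assert (Hcase : (D < 0 /\ -D < 3*(p*p)) \/ (D > 0 /\ D < 5*(p*p))).
  { unfold small_prime_bound in Hb. lia. }
  assert (Hgoal : forall m', (p | Nm D (mkOD m' 1)) -> (2*m'+s)*(2*m'+s) - D < 4*(p*p) ->
                  -(4*(p*p)) < (2*m'+s)*(2*m'+s) - D ->
     exists m', (p | Nm D (mkOD m' 1)) /\ Nm D (mkOD m' 1) <> 0 /\ Z.abs (Nm D (mkOD m' 1)) < p * p).
  { intros m0 G1 G2 G3. exists m0. split; [exact G1|].
    pose proof (four_Nm D m0 hD) as E. fold s in E. split.
    - intro H0. apply (Nm_zero D) in H0; [|exact hD]. discriminate H0.
    - lia. }
  destruct (Z_lt_le_dec D (4*(p*p))) as [Hsm|Hbig].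
  - destruct (Hch (-p-1)) as [m' [G1 G2]].
    apply (Hgoal m' G1); nia.
  - assert (H0 : 0 <= D - 4*(p*p)) by lia.
    pose proof (Z.sqrt_spec _ H0) as HL. cbn zeta in HL. set (L := Z.sqrt (D - 4*(p*p))) in *.
    assert (0 <= L) by (apply Z.sqrt_nonneg).
    assert (L < p) by nia.
    destruct (Hch L) as [m' [G1 G2]].
    apply (Hgoal m' G1); nia.
Qed.

Definition IrrPrime D q := ODirreducible D (ODint q) -> ODprime D (ODint q).

Lemma not_irr D x : x <> OD0 -> ~ ODunit D x -> ~ ODirreducible D x ->
  exists a b, x = ODmul D a b /\ ~ ODunit D a /\ ~ ODunit D b.
Proof.
  intros H0 H1 H2. apply NNPP. intro Hn. apply H2. split; [exact H0|split; [exact H1|]].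
  intros a b E. apply NNPP. intro Hab. apply Hn. exists a, b. tauto.
Qed.

Lemma prime_div_exists : forall n : nat, forall k, 1 < k <= Z.of_nat n -> exists q, prime q /\ (q | k).
Proof.
  induction n; intros k Hk. lia.
  destruct (prime_dec k) as [Hp|Hnp]. exists k. split; [exact Hp|apply Z.divide_refl].
  destruct (not_prime_divide k ltac:(lia) Hnp) as [m [Hm Hmk]].
  destruct (IHn m ltac:(lia)) as [q [Hq Hqm]]. exists q. split; [exact Hq|].
  eapply Z.divide_trans; eauto.
Qed.

Lemma prime_div_exists' k : 1 < Z.abs k -> exists q, prime q /\ (q | k).
Proof.
  intro H. destruct (prime_div_exists (Z.to_nat (Z.abs k)) (Z.abs k) ltac:(lia)) as [q [Hq Hd]].
  exists q. split; [exact Hq|]. apply Z.divide_abs_r. exact Hd.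
Qed.

Lemma prime_step D q y : quad_disc D -> prime q -> IrrPrime D q -> (q | Nm D y) ->
  exists rho z, y = ODmul D rho z /\ ODprime D rho /\
     (Nm D rho = q \/ Nm D rho = - q \/ Nm D rho = q * q).
Proof.
  intros hD Hq HI [t Ht]. pose proof (prime_gt1 q Hq) as Hq1.
  assert (Hyy : ODdvd D (ODint q) (ODmul D y (conj D y))).
  { rewrite mul_conj, Ht. apply dvd_int_int. apply Z.divide_factor_r. }
  assert (Hq0 : ODint q <> OD0). { intro E. injection E. lia. }
  assert (Hqu : ~ ODunit D (ODint q)). { rewrite unit_Nm, Nm_int. nia. }
  destruct (classic (ODirreducible D (ODint q))) as [Hirr|Hnirr].
  - pose proof (HI Hirr) as Hpr. pose proof Hpr as [_ [_ Hpr2]].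
    destruct (Hpr2 _ _ Hyy) as [[z Hz]|[z Hz]].
    + exists (ODint q), z. repeat split; auto. rewrite Nm_int. tauto.
    + exists (ODint q), (conj D z). repeat split; auto.
      * rewrite <- (conj_conj D y), Hz, conj_mul, conj_int. reflexivity.
      * rewrite Nm_int. tauto.
  - destruct (not_irr D _ Hq0 Hqu Hnirr) as [a [b [Hab [Ha Hb]]]].
    assert (HN : Nm D a = q \/ Nm D a = - q).
    { pose proof (f_equal (Nm D) Hab) as E. rewrite Nm_int, Nm_mul in E.
      rewrite unit_Nm in Ha, Hb.
      assert (Hd : (q | Nm D a * Nm D b)) by (rewrite <- E; apply Z.divide_factor_l).
      destruct (prime_mult q Hq _ _ Hd) as [[a' Ha']|[b' Hb']].
      - assert (Hb2 : (Nm D b | q)).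
        { exists a'. apply (Z.mul_reg_l _ _ q); [lia|]. rewrite Ha' in E. lia. }
        destruct (prime_divisors q Hq _ Hb2) as [?|[?|[?|?]]]; try lia;
        rewrite Ha' in E; nia.
      - assert (Ha2 : (Nm D a | q)).
        { exists b'. apply (Z.mul_reg_l _ _ q); [lia|]. rewrite Hb' in E. lia. }
        destruct (prime_divisors q Hq _ Ha2) as [?|[?|[?|?]]]; lia. }
    assert (Hpa : ODprime D a) by (eapply prime_norm; eauto).
    assert (Hay : ODdvd D a (ODmul D y (conj D y))).
    { eapply dvd_trans; [|exact Hyy]. exists b. exact Hab. }
    pose proof Hpa as [_ [_ Hpa2]].
    destruct (Hpa2 _ _ Hay) as [[z Hz]|[z Hz]].
    + exists a, z. split; [exact Hz|split; [exact Hpa|tauto]].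
    + exists (conj D a), (conj D z). split; [|split].
      * rewrite <- (conj_conj D y), Hz, conj_mul. reflexivity.
      * eapply prime_norm; eauto. rewrite Nm_conj. exact HN.
      * rewrite Nm_conj. tauto.
Qed.

Lemma descent D p : quad_disc D -> prime p -> forall n : nat, forall y k,
  Z.abs k <= Z.of_nat n -> Nm D y = p * k -> k <> 0 ->
  (forall q, prime q -> (q | k) -> q < p /\ IrrPrime D q) -> ~ (p | k) ->
  exists w, Nm D w = p \/ Nm D w = - p.
Proof.
  intros hD Hp. pose proof (prime_gt1 p Hp) as Hp1.
  induction n; intros y k Hk HN Hk0 Hq Hpk. lia.
  destruct (Z.eq_dec (Z.abs k) 1) as [E1|E1].
  { exists y. rewrite HN. lia. }
  destruct (prime_div_exists' k ltac:(lia)) as [q [Hqp Hqk]].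
  destruct (Hq q Hqp Hqk) as [Hqlt HI].
  pose proof (prime_gt1 q Hqp).
  assert (HqN : (q | Nm D y)) by (rewrite HN; apply Z.divide_mul_r; exact Hqk).
  destruct (prime_step D q y hD Hqp HI HqN) as [rho [z [Hy [_ Hrho]]]].
  assert (HNy : Nm D y = Nm D rho * Nm D z) by (rewrite Hy; apply Nm_mul).
  assert (Hpc : ~ (p | Nm D rho)).
  { intro Hd. assert (Hpq : (p | q)).
    { destruct Hrho as [E|[E|E]]; rewrite E in Hd.
      - exact Hd.
      - apply Z.divide_opp_r in Hd. rewrite Z.opp_involutive in Hd. exact Hd.
      - destruct (prime_mult p Hp _ _ Hd); assumption. }
    apply Z.divide_pos_le in Hpq; lia. }
  assert (Hpz : (p | Nm D z)).
  { assert (Hd : (p | Nm D rho * Nm D z)) by (rewrite <- HNy, HN; apply Z.divide_factor_l).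
    destruct (prime_mult p Hp _ _ Hd); [contradiction|assumption]. }
  destruct Hpz as [k' Hk'].
  assert (Ek : k = Nm D rho * k').
  { apply (Z.mul_reg_l _ _ p); [lia|]. rewrite <- HN, HNy, Hk'. ring. }
  apply (IHn z k').
  - destruct Hrho as [E|[E|E]]; rewrite E in Ek; subst k; nia.
  - rewrite Hk'. ring.
  - intro; subst; lia.
  - intros q' Hq' Hd. apply Hq; [exact Hq'|]. rewrite Ek. apply Z.divide_mul_r. exact Hd.
  - intro Hd. apply Hpk. rewrite Ek. apply Z.divide_mul_r. exact Hd.
Qed.

Lemma all_irr_prime D : quad_disc D ->
  (forall p : Z, prime p -> small_prime_bound D p -> IrrPrime D p) ->
  forall p, 0 <= p -> prime p -> IrrPrime D p.
Proof.
  intros hD Hyp p0 Hp0. apply (Z_lt_induction (fun p => prime p -> IrrPrime D p)); [|exact Hp0]. clear p0 Hp0. intros p IH Hp.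
  pose proof (prime_gt1 p Hp) as Hp1.
  destruct (classic (small_prime_bound D p)) as [Hs|Hs]; [apply Hyp; auto|].
  intro Hirr. pose proof Hirr as [H0 [H1 H2]].
  apply NNPP. intro Hnp.
  assert (Hex : exists a b, ODdvd D (ODint p) (ODmul D a b) /\ ~ ODdvd D (ODint p) a /\ ~ ODdvd D (ODint p) b).
  { apply NNPP. intro Hn. apply Hnp. split; [exact H0|split; [exact H1|]].
    intros a b Hab. apply NNPP. intro Hc. apply Hn. exists a, b. tauto. }
  destruct Hex as [a [b [Hab [Ha Hb]]]].
  pose proof (nonprime_norm D p a b Hp Hab Hb) as HNa.
  destruct (root_from_norm D p a Hp HNa Ha) as [m Hm].
  destruct (choose_m D p m hD Hp Hm Hs) as [m' [[k Hk] [Hn0 Hlt]]].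
  assert (Hk0 : k <> 0) by (intro; subst; lia).
  assert (Hkp : Z.abs k < p) by (rewrite Hk in Hlt; nia).
  destruct (descent D p hD Hp (Z.to_nat (Z.abs k)) (mkOD m' 1) k ltac:(lia) ltac:(rewrite Hk; ring) Hk0)
    as [w Hw].
  - intros q Hq Hqk. pose proof (prime_gt1 q Hq).
    assert (q <= Z.abs k) by (apply Z.divide_pos_le; [lia|apply Z.divide_abs_r; exact Hqk]).
    split; [lia|]. apply IH; [lia|exact Hq].
  - intros [t Ht]. subst k. rewrite Z.abs_mul in Hkp. assert (t <> 0) by (intro; subst; lia). nia.
  - assert (Hwu : ~ ODunit D w) by (rewrite unit_Nm; lia).
    assert (Hc : exists c, ~ ODunit D c /\ ODint p = ODmul D w c).
    { destruct Hw as [E|E].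
      - exists (conj D w). split.
        + rewrite unit_Nm, Nm_conj. lia.
        + rewrite mul_conj, E. reflexivity.
      - exists (ODmul D (ODint (-1)) (conj D w)). split.
        + rewrite unit_Nm, Nm_mul, Nm_conj, Nm_int. lia.
        + rewrite mul_assoc, (mul_comm D w), <- mul_assoc, mul_conj, E, int_mul. f_equal. ring. }
    destruct Hc as [c [Hcu Hc]].
    destruct (H2 w c Hc); contradiction.
Qed.

Lemma irr_is_prime D g : quad_disc D -> (forall q, prime q -> IrrPrime D q) ->
  ODirreducible D g -> ODprime D g.
Proof.
  intros hD HI Hg. pose proof Hg as [H0 [H1 H2]].
  assert (Hn : 1 < Z.abs (Nm D g)).
  { pose proof (Nm_nonzero D g hD H0). rewrite unit_Nm in H1. lia. }
  destruct (prime_div_exists' _ Hn) as [q [Hq Hqd]].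
  destruct (prime_step D q g hD Hq (HI q Hq) Hqd) as [rho [z [Hgz [Hr _]]]].
  destruct (H2 _ _ Hgz) as [U|U].
  - exfalso. destruct Hr as [_ [Hr _]]. exact (Hr U).
  - rewrite Hgz. apply prime_assoc; assumption.
Qed.

Lemma prod_app D l1 l2 : ODprod D (l1 ++ l2) = ODmul D (ODprod D l1) (ODprod D l2).
Proof. induction l1; simpl. rewrite mul_1_l. reflexivity. rewrite IHl1, mul_assoc. reflexivity. Qed.

Lemma prod_perm D l l' : Permutation l l' -> ODprod D l = ODprod D l'.
Proof.
  induction 1; simpl; try congruence.
  rewrite !mul_assoc, (mul_comm D y x). reflexivity.
Qed.

Lemma unit_1 D : ODunit D OD1.
Proof. exists OD1. apply mul_1_l. Qed.

Lemma existence D : quad_disc D -> forall n : nat, forall x, Z.abs (Nm D x) <= Z.of_nat n -> x <> OD0 -> ~ ODunit D x ->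
  exists l, Forall (ODirreducible D) l /\ ODprod D l = x.
Proof.
  intros hD. induction n; intros x Hn H0 H1.
  { pose proof (Nm_nonzero D x hD H0). lia. }
  destruct (classic (ODirreducible D x)) as [Hi|Hi].
  { exists (x :: nil). split. constructor; auto. simpl. apply mul_1_r. }
  destruct (not_irr D x H0 H1 Hi) as [a [b [Hab [Ha Hb]]]].
  assert (Ha0 : a <> OD0). { intro; subst. apply H0. destruct b; unfold ODmul, OD0; cbn. f_equal; ring. }
  assert (Hb0 : b <> OD0). { intro; subst. apply H0. destruct a; unfold ODmul, OD0; cbn. f_equal; ring. }
  pose proof (Nm_nonzero D a hD Ha0). pose proof (Nm_nonzero D b hD Hb0).
  rewrite unit_Nm in Ha, Hb.
  assert (E : Nm D x = Nm D a * Nm D b) by (rewrite Hab; apply Nm_mul).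
  rewrite E, Z.abs_mul in Hn.
  destruct (IHn a) as [la [Fa Pa]]; [nia|auto|rewrite unit_Nm; auto|].
  destruct (IHn b) as [lb [Fb Pb]]; [nia|auto|rewrite unit_Nm; auto|].
  exists (la ++ lb). split. apply Forall_app; auto. rewrite prod_app, Pa, Pb. auto.
Qed.

Lemma prime_dvd_prod D p l : ODprime D p -> ODdvd D p (ODprod D l) -> exists y, In y l /\ ODdvd D p y.
Proof.
  intros Hp. pose proof Hp as [_ [Hu H2]]. induction l; simpl; intro Hd.
  - exfalso. apply Hu. eapply dvd_unit; [apply unit_1|exact Hd].
  - destruct (H2 _ _ Hd) as [H|H]. exists a; auto.
    destruct (IHl H) as [y [Hy Hy']]. exists y; auto.
Qed.

Lemma uniqueness D : quad_disc D -> (forall g, ODirreducible D g -> ODprime D g) ->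
  forall l1 l2 u, ODunit D u -> Forall (ODirreducible D) l1 -> Forall (ODirreducible D) l2 ->
  ODprod D l1 = ODmul D u (ODprod D l2) ->
  exists l2', Permutation l2 l2' /\ Forall2 (ODassoc D) l1 l2'.
Proof.
  intros hD HP. induction l1 as [|pi l1 IH]; intros l2 u Hu F1 F2 E.
  - destruct l2 as [|y r].
    + exists nil. auto.
    + exfalso. inversion F2 as [|? ? Hy _]; subst. destruct Hy as [_ [Hy _]]. apply Hy.
      simpl in E. apply (dvd_unit D y OD1 (unit_1 D)). rewrite E. apply dvd_mul_l, dvd_mul_r, dvd_refl.
  - inversion F1 as [|? ? Hpi F1']; subst.
    pose proof (HP _ Hpi) as Hpp. pose proof Hpp as [Hp0 [Hpu Hp2]].
    assert (Hd : ODdvd D pi (ODmul D u (ODprod D l2))).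
    { rewrite <- E. simpl. apply dvd_mul_r, dvd_refl. }
    destruct (Hp2 _ _ Hd) as [Hdu|Hdl].
    { exfalso. apply Hpu. eapply dvd_unit; eauto. }
    destruct (prime_dvd_prod D pi l2 Hpp Hdl) as [y [Hin [v Hv]]].
    assert (Hyi : ODirreducible D y) by (rewrite Forall_forall in F2; auto).
    assert (Hvu : ODunit D v).
    { destruct Hyi as [_ [_ Hy3]]. destruct (Hy3 _ _ Hv); [contradiction|assumption]. }
    destruct (in_split y l2) as [A [B HAB]]; [exact Hin|].
    assert (Hperm : Permutation l2 (y :: A ++ B)).
    { rewrite HAB. apply Permutation_sym, Permutation_middle. }
    assert (E2 : ODprod D l1 = ODmul D (ODmul D u v) (ODprod D (A ++ B))).
    { apply (mul_cancel D pi); [exact hD|exact Hp0|].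
      simpl in E. rewrite E, (prod_perm D _ _ Hperm). simpl. rewrite Hv.
      rewrite !mul_assoc. f_equal. rewrite (mul_comm D u pi), <- mul_assoc. reflexivity. }
    assert (F2' : Forall (ODirreducible D) (A ++ B)).
    { rewrite Forall_forall in *. intros x Hx. apply F2. rewrite HAB. apply in_or_app.
      apply in_app_or in Hx. simpl. tauto. }
    destruct (IH (A ++ B) (ODmul D u v) (unit_mul D u v Hu Hvu) F1' F2' E2) as [l2'' [Hp' Hf']].
    exists (y :: l2''). split.
    + eapply Permutation_trans; [exact Hperm|]. apply perm_skip. exact Hp'.
    + constructor; [|exact Hf']. exists v. split; [exact Hvu|]. rewrite Hv. apply mul_comm.
Qed.

Theorem theorem1 (D : Z) (hD : quad_disc D) :
  (forall p : Z, prime p -> small_prime_bound D p ->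
     ODirreducible D (ODint p) -> ODprime D (ODint p)) ->
  ODisUFD D.
Proof.
  intros Hyp.
  assert (HI : forall q, prime q -> IrrPrime D q).
  { intros q Hq. apply (all_irr_prime D hD Hyp); [pose proof (prime_gt1 q Hq); lia|exact Hq]. }
  assert (HP : forall g, ODirreducible D g -> ODprime D g) by (intros; apply irr_is_prime; auto).
  intros x H0 H1. split.
  - apply (existence D hD (Z.to_nat (Z.abs (Nm D x)))); auto. lia.
  - intros l1 l2 F1 F2 E1 E2. apply (uniqueness D hD HP l1 l2 OD1 (unit_1 D) F1 F2).
    rewrite mul_1_l, E1, E2. reflexivity.
Qed.
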